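(* For any embedded rectangle $R=(B,A_1,A_2)$ with $B\subseteq EB^{-1}(1)$ we have $\alpha(R)\le 2^{-2m(R)}$.
   Context: $D$ is a finite domain. Two elements $x=(x_1,x_2)$, $y=(y_1,y_2)$ of $D\times D$ are bidistinct if $x_1\ne y_2$ and $x_2\ne y_1$. $EB:(D\times D)^n\to\{0,1\}$ equals $1$ iff for all $1\le i,j\le n$ the $i$-th and $j$-th pairs are bidistinct; inputs are viewed as functions $[1,n]\to D'$ with $D'=D\times D$. For $A\subseteq[1,n]$, a partial input on $A$ is a function $A\to D'$; for disjoint $A_1,A_2$ and partial inputs $\tau_1,\tau_2$ on them, $\tau_1\tau_2$ is the partial input on $A_1\cup A_2$ agreeing with each. For $B\subseteq D'^{[1,n]}$, $B_A$ is the set of partial inputs on $A$ that agree with some input in $B$. An embedded rectangle is a triple $R=(B,A_1,A_2)$ with $A_1,A_2\subseteq[1,n]$ disjoint and $B\subseteq D'^{[1,n]}$ such that (i) $B_{[1,n]\setminus(A_1\cup A_2)}$ consists of a single partial input $\sigma$ and (ii) whenever $\tau_1\in B_{A_1}$ and $\tau_2\in B_{A_2}$, $\tau_1\tau_2\sigma\in B$. Define $m_j(R)=|A_j|$, $m(R)=\min(m_1(R),m_2(R))$, $\alpha_j(R)=|B_{A_j}|/|D'|^{|A_j|}$, $\alpha(R)=\min(\alpha_1(R),\alpha_2(R))$. *)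

(* Defs.v *)
From HB Require Import structures.
From mathcomp Require Import all_boot all_order all_algebra.
Set Implicit Arguments. Unset Strict Implicit. Unset Printing Implicit Defensive.
Import Order.TTheory GRing.Theory Num.Theory.

(* Positions [1,n] are represented by 'I_n; D' = D * D; an input is a
   finite function 'I_n -> D * D. *)
Section EB.
Variables (D : finType) (n : nat).

Definition input := {ffun 'I_n -> D * D}.

Definition bidistinct (x y : D * D) : bool := (x.1 != y.2) && (x.2 != y.1).

Definition EB (x : input) : bool :=
  [forall i : 'I_n, forall j : 'I_n, bidistinct (x i) (x j)].

Definition restr (A : {set 'I_n}) (x : input) : {ffun 'I_n -> option (D * D)} :=
  [ffun i => if i \in A then Some (x i) else None].

Definition proj (B : {set input}) (A : {set 'I_n}) :=
  [set restr A x | x in B].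

(* tau1 tau2 sigma, with tau_j = restriction of x_j to A_j and
   sigma = restriction of x3 to the complement. *)
Definition glue (A1 A2 : {set 'I_n}) (x1 x2 x3 : input) : input :=
  [ffun i => if i \in A1 then x1 i else if i \in A2 then x2 i else x3 i].

Definition embedded_rectangle (B : {set input}) (A1 A2 : {set 'I_n}) : Prop :=
  [disjoint A1 & A2] /\
  #|proj B (~: (A1 :|: A2))| = 1%N /\
  (forall x1 x2 x3, x1 \in B -> x2 \in B -> x3 \in B -> glue A1 A2 x1 x2 x3 \in B).

Local Open Scope ring_scope.

Definition alpha_j (B : {set input}) (A : {set 'I_n}) : rat :=
  (#|proj B A|)%:R / (#|{: D * D}| ^ #|A|)%:R.

Definition alpha (B : {set input}) (A1 A2 : {set 'I_n}) : rat :=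
  Num.min (alpha_j B A1) (alpha_j B A2).

Definition m_rect (A1 A2 : {set 'I_n}) : nat := minn #|A1| #|A2|.

End EB.

(* Main.v *)
Require Import Defs.
From mathcomp Require Import all_boot all_order all_algebra.
From mathcomp Require Import zify.
Import Order.TTheory GRing.Theory Num.Theory.
Local Open Scope ring_scope.

Lemma rat_bound (P Q M : nat) : (0 < Q)%N -> (0 < M)%N -> (P * M <= Q)%N ->
  (P%:R / Q%:R : rat) <= (M%:R)^-1.
Proof.
move=> Q0 M0 H.
rewrite ler_pdivrMr ?ltr0n // ler_pdivlMl ?ltr0n //.
by rewrite -natrM ler_nat mulnC.
Qed.

Lemma alpha_bound (P Q M : nat) : (0 < M)%N -> ((0 < Q)%N -> (P * M <= Q)%N) ->
  (P%:R / Q%:R : rat) <= (M%:R)^-1.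
Proof.
move=> M0 H; case: (posnP Q) => [->|Q0].
  by rewrite invr0 mulr0 invr_ge0 ler0n.
by apply: rat_bound => //; apply: H.
Qed.

Lemma choose4 (a b c e d : nat) : (a + e <= d)%N -> (b+c <= d)%N ->
  (4*(a*b) <= d*d)%N \/ (4*(c*e) <= d*d)%N.
Proof.
move=> h1 h2; rewrite !mulnA.
have g1 : (4*a*e <= d*d)%N.
  have := leq_mul h1 h1. have := (nat_AGM2 a e).1. rewrite -mulnA. move=> u v; exact: leq_trans u v.
have g2 : (4*b*c <= d*d)%N.
  have := leq_mul h2 h2. have := (nat_AGM2 b c).1. rewrite -mulnA. move=> u v; exact: leq_trans u v.
case: (leqP (4*a*b) (d*d)) => h; [by left|right].
rewrite leqNgt; apply/negP => h'.
have := ltn_mul h h'. have := leq_mul g1 g2.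
have -> : (4*a*e*(4*b*c) = 4*a*b*(4*c*e))%N by nia.
move=> p q; have := leq_trans q p; by rewrite ltnn.
Qed.

Lemma nat_final (p x y k m : nat) : (m <= k)%N -> (p <= x ^ k)%N -> (4 * x <= y)%N ->
  (p * 4 ^ m <= y ^ k)%N.
Proof.
move=> mk px xy.
apply: (leq_trans (leq_mul px (leq_pexp2l (isT : (0 < 4)%N) mk))).
rewrite -expnMn mulnC.
case: k {mk px} => [//|k]; by rewrite leq_exp2r.
Qed.

Section Main.
Variables (D : finType) (n : nat).

Lemma card_proj (B : {set input D n}) (A : {set 'I_n}) (L R : {set D}) :
  (forall x i, x \in B -> i \in A -> ((x i).1 \in L) && ((x i).2 \in R)) ->
  (#|proj B A| <= (#|L| * #|R|) ^ #|A|)%N.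
Proof.
move=> HLR.
pose F := fun i : 'I_n => if i \in A then Some @: setX L R else [set None].
have sub : {subset proj B A <= family (fun i => mem (F i))}.
  move=> f /imsetP [x xB ->]; apply/familyP => i.
  rewrite /F ffunE; case: ifP => iA; last by rewrite inE.
  apply: imset_f; rewrite inE; exact: HLR.
have sub' : proj B A \subset family (fun i => mem (F i)) by apply/subsetP.
apply: (leq_trans (subset_leq_card sub')).
rewrite card_family.
have -> : foldr muln 1 [seq #|[eta mem (F x)]| | x : 'I_n] = (\prod_(i : 'I_n) #|F i|)%N.
  have fm : forall s : seq 'I_n, foldr muln 1 [seq #|F x| | x <- s] = (\prod_(i <- s) #|F i|)%N.
    by elim=> [|a s IH]; rewrite ?big_nil ?big_cons //= IH.
  by rewrite /image_mem fm big_enum.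
rewrite (bigID (mem A)) /=.
rewrite (eq_bigr (fun _ => #|L| * #|R|)%N); last first.
  by move=> i iA; rewrite /F iA card_imset ?cardsX //; exact: Some_inj.
rewrite [X in (_ * X)%N](eq_bigr (fun _ => 1%N)); last first.
  by move=> i iA; rewrite /F (negbTE iA) cards1.
by rewrite prod_nat_const big1_eq muln1.
Qed.

Lemma cross (B : {set input D n}) (A1 A2 : {set 'I_n}) x1 x2 i j :
  embedded_rectangle B A1 A2 -> B \subset [set x | EB x] ->
  x1 \in B -> x2 \in B -> i \in A1 -> j \in A2 -> bidistinct (x1 i) (x2 j).
Proof.
move=> [dis [_ gl]] sB x1B x2B iA jA.
have := subsetP sB _ (gl _ _ _ x1B x2B x1B); rewrite inE => /forallP /(_ i) /forallP /(_ j).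
have jA1 : j \notin A1 by rewrite (disjointFl dis jA).
by rewrite /glue !ffunE iA (negbTE jA1) jA.
Qed.
End Main.

Theorem lemma10 (D : finType) (n : nat) (B : {set input D n})
    (A1 A2 : {set 'I_n}) :
  embedded_rectangle B A1 A2 ->
  B \subset [set x | EB x] ->
  alpha B A1 A2 <= ((2 ^ (2 * m_rect A1 A2))%N%:R)^-1.
Proof.
move=> ER sB.
pose L1 := [set (x i).1 | x : input D n in B, i : 'I_n in A1].
pose R1 := [set (x i).2 | x : input D n in B, i : 'I_n in A1].
pose L2 := [set (x i).1 | x : input D n in B, i : 'I_n in A2].
pose R2 := [set (x i).2 | x : input D n in B, i : 'I_n in A2].
have c1 : (#|proj B A1| <= (#|L1| * #|R1|) ^ #|A1|)%N.
  by apply: card_proj => x i xB iA; rewrite !imset2_f.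
have c2 : (#|proj B A2| <= (#|L2| * #|R2|) ^ #|A2|)%N.
  by apply: card_proj => x i xB iA; rewrite !imset2_f.
have d1 : (#|L1| + #|R2| <= #|D|)%N.
  rewrite -cardsUI.
  have -> : L1 :&: R2 = set0.
    apply/setP => y; rewrite !inE; apply/negP => /andP [/imset2P [x1 i x1B iA ->]].
    move=> /imset2P [x2 j x2B jA e].
    by move: (@cross D n B A1 A2 x1 x2 i j ER sB x1B x2B iA jA); rewrite /bidistinct e eqxx.
  by rewrite cards0 addn0 max_card.
have d2 : (#|R1| + #|L2| <= #|D|)%N.
  rewrite -cardsUI.
  have -> : R1 :&: L2 = set0.
    apply/setP => y; rewrite !inE; apply/negP => /andP [/imset2P [x1 i x1B iA ->]].
    move=> /imset2P [x2 j x2B jA e].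
    by move: (@cross D n B A1 A2 x1 x2 i j ER sB x1B x2B iA jA); rewrite /bidistinct e eqxx andbF.
  by rewrite cards0 addn0 max_card.
rewrite /alpha ge_min /alpha_j card_prod expnM.
have m1 : (m_rect A1 A2 <= #|A1|)%N by rewrite /m_rect geq_minl.
have m2 : (m_rect A1 A2 <= #|A2|)%N by rewrite /m_rect geq_minr.
case: (@choose4 _ _ _ _ _ d1 d2) => h; apply/orP; [left|right];
  (apply: alpha_bound; [by rewrite !expn_gt0 | move=> _]).
  exact: (@nat_final _ _ _ _ _ m1 c1 h).
exact: (@nat_final _ _ _ _ _ m2 c2 h).
Qed.
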